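(* Let $G$ be a bipartite permutation graph with a transitive vertex ordering $<$ and let $e,e'\in E(G)$ with $l(e)<l(e')$. (a) If $r(e)<l(e')$, then $\{e,e'\}$ is a uniquely restricted matching in $G$. (b) If $l(e')<r(e)<r(e')$, then $\{e,e'\}$ is a uniquely restricted matching in $G$ if and only if $l(e)r(e')\notin E(G)$. (c) If $r(e')<r(e)$, then $\{e,e'\}$ is not a uniquely restricted matching in $G$.
   Context: Graphs are finite, simple, undirected. A permutation graph is a graph isomorphic to some $G_\pi$, where for a permutation $\pi$ of $\{1,\dots,n\}$, $G_\pi$ has vertex set $\{1,\dots,n\}$ and edges $ij$ with $(i-j)(\pi(i)-\pi(j))<0$; a bipartite permutation graph is a permutation graph that is bipartite. An ordering $<$ of $V(G)$ is a transitive vertex ordering if for all $u<v<w$: (a) $uv,vw\in E(G)$ implies $uw\in E(G)$, and (b) $uw\in E(G)$ implies $uv\in E(G)$ or $vw\in E(G)$. For an edge $e=uv$, $l(e)=\min_<\{u,v\}$ and $r(e)=\max_<\{u,v\}$. A matching is a set of pairwise vertex-disjoint edges; it is uniquely restricted if no other matching of $G$ matches exactly the same vertex set. *)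

(* Defs.v *)
From mathcomp Require Import all_boot all_order all_fingroup.
Set Implicit Arguments. Unset Strict Implicit. Unset Printing Implicit Defensive.

Section Graphs.
Variable T : finType.

Definition simple_graph (adj : rel T) : Prop :=
  symmetric adj /\ irreflexive adj.

Definition perm_graph_adj (n : nat) (pi : 'S_n) (i j : 'I_n) : bool :=
  (i != j) && ((i < j) != (pi i < pi j)).

Definition is_permutation_graph (adj : rel T) : Prop :=
  exists (n : nat) (pi : 'S_n) (f : T -> 'I_n),
    bijective f /\ forall u v, adj u v = perm_graph_adj pi (f u) (f v).

Definition is_bipartite (adj : rel T) : Prop :=
  exists c : T -> bool, forall u v, adj u v -> c u != c v.

Definition bipartite_permutation_graph (adj : rel T) : Prop :=
  simple_graph adj /\ is_permutation_graph adj /\ is_bipartite adj.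

(* A linear ordering of V(G) is given by an injective rank function
   (u < v iff rk u < rk v). *)
Definition transitive_vertex_ordering (adj : rel T) (rk : T -> nat) : Prop :=
  injective rk /\
  forall u v w, rk u < rk v -> rk v < rk w ->
    (adj u v -> adj v w -> adj u w) /\
    (adj u w -> adj u v \/ adj v w).

Definition is_edge (adj : rel T) (e : {set T}) : Prop :=
  exists u v, adj u v /\ e = [set u; v].

Definition is_matching (adj : rel T) (M : {set {set T}}) : Prop :=
  (forall e, e \in M -> is_edge adj e) /\
  (forall e f, e \in M -> f \in M -> e != f -> [disjoint e & f]).

Definition matched_vertices (M : {set {set T}}) : {set T} := cover M.

Definition uniquely_restricted (adj : rel T) (M : {set {set T}}) : Prop :=
  is_matching adj M /\
  forall M', is_matching adj M' ->
    matched_vertices M' = matched_vertices M -> M' = M.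

End Graphs.

(* Main.v *)
Require Import Defs.
From mathcomp Require Import all_boot all_order all_fingroup.
Set Implicit Arguments. Unset Strict Implicit. Unset Printing Implicit Defensive.

Ltac simp := rewrite ?inE ?eqxx /=;
  repeat (match goal with
    | H : is_true (?x != ?y) |- context [?x == ?y] => rewrite (negbTE H)
    | H : is_true (?x != ?y) |- context [?y == ?x] => rewrite (eq_sym y x) (negbTE H)
    | H : is_true (?x != ?y) , H' : is_true (?x == ?y) |- _ => by rewrite H' in H
    | H : is_true (?x != ?y) , H' : is_true (?y == ?x) |- _ => by rewrite eq_sym H' in H
  end; rewrite ?inE ?eqxx /=); try done.

Section S.
Variable T : finType.

Lemma in_cover (P : {set {set T}}) z :
  reflect (exists2 e, e \in P & z \in e) (z \in cover P).
Proof. exact: bigcupP. Qed.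

Lemma cover2 (A B : {set T}) : cover [set A; B] = A :|: B.
Proof.
apply/setP => z; apply/in_cover/idP.
- by case=> e; rewrite !inE => /orP[]/eqP-> ->; rewrite ?orbT.
- rewrite inE => /orP[] hz; [exists A | exists B] => //; by rewrite !inE eqxx ?orbT.
Qed.

Lemma not_ur (adj : rel T) (a b c d : T) :
  a != b -> a != c -> a != d -> b != c -> b != d -> c != d ->
  adj a d -> adj b c ->
  ~ uniquely_restricted adj [set [set a; b]; [set c; d]].
Proof.
move=> hab hac had hbc hbd hcd ad bc [_ H].
have Hm : is_matching adj [set [set a; d]; [set b; c]].
  { split.
  - move=> e; rewrite !inE => /orP[]/eqP->; [exists a, d | exists b, c]; by [].
  - move=> e f; rewrite !inE => /orP[]/eqP-> /orP[]/eqP->; rewrite ?eqxx // => _;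
    rewrite disjoint_subset; apply/subsetP => z; rewrite !inE => /orP[]/eqP->; simp. }
have Hc : matched_vertices [set [set a; d]; [set b; c]] =
          matched_vertices [set [set a; b]; [set c; d]].
  rewrite /matched_vertices !cover2; apply/setP => w; rewrite !inE.
  by case: (w == a); case: (w == b); case: (w == c); case: (w == d).
have := H _ Hm Hc => /setP /(_ [set a; d]).
rewrite !inE eqxx /=.
have -> : ([set a; d] == [set a; b]) = false.
  apply/negbTE/negP => /eqP/setP/(_ d); simp.
have -> : ([set a; d] == [set c; d]) = false.
  apply/negbTE/negP => /eqP/setP/(_ a); simp.
by [].
Qed.


Lemma ur (adj : rel T) (a b c d x y : T) :
  a != b -> a != c -> a != d -> b != c -> b != d -> c != d ->
  adj a b -> adj c d -> x \in [set a; b] -> y \in [set c; d] ->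
  (forall u v, adj u v -> u \in [set a; b] :|: [set c; d] ->
     v \in [set a; b] :|: [set c; d] ->
     [set u; v] \in [set [set a; b]; [set c; d]; [set x; y]]) ->
  uniquely_restricted adj [set [set a; b]; [set c; d]].
Proof.
move=> hab hac had hbc hbd hcd ab cd hx hy cls.
split.
{ split.
  - move=> e; rewrite !inE => /orP[]/eqP->; [exists a, b | exists c, d]; by [].
  - move=> e f; rewrite !inE => /orP[]/eqP-> /orP[]/eqP->; rewrite ?eqxx // => _;
    rewrite disjoint_subset; apply/subsetP => z; rewrite !inE => /orP[]/eqP->; simp. }
move=> M' Hm Hc; rewrite /matched_vertices cover2 in Hc.
have Hin e : e \in M' -> e \in [set [set a; b]; [set c; d]; [set x; y]].
  move=> he; have [u [v [huv De]]] := Hm.1 e he; subst e.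
  apply: cls => //; rewrite -Hc; apply/in_cover; exists [set u; v] => //;
  by rewrite !inE eqxx ?orbT.
have Hex z : z \in [set a; b] :|: [set c; d] -> exists2 e, e \in M' & z \in e.
  by move=> hz; apply/in_cover; rewrite Hc.
have HX : [set x; y] \notin M'.
  apply/negP => hX.
  have Hnab : [set a; b] != [set x; y].
    apply/negP => /eqP/setP/(_ y); move: hy; rewrite !inE eqxx orbT => /orP[]/eqP->; simp.
  have Hab_in : [set a; b] \in M' -> False.
    move=> hab'; have := Hm.2 _ _ hab' hX Hnab.
    move/disjointFr/(_ hx); by rewrite !inE eqxx.
  case: (Hex a) => [|e he hae]; first by simp.
  move: (Hin e he); rewrite !inE => /orP[/orP[]|]/eqP De; subst e.
  - exact: Hab_in.
  - by move: hae; simp.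
  case: (Hex b) => [|e he2 hbe]; first by simp.
  move: (Hin e he2); rewrite !inE => /orP[/orP[]|]/eqP De; subst e.
  - exact: Hab_in.
  - by move: hbe; simp.
  move: hx hy hae hbe; rewrite !inE => /orP[]/eqP-> /orP[]/eqP->; simp.
apply/setP => e; apply/idP/idP.
- move=> he; have := Hin e he; rewrite !inE => /orP[/orP[]|]/eqP De; subst e;
  rewrite ?eqxx ?orbT //; by rewrite he in HX.
- rewrite !inE => /orP[]/eqP->.
  + case: (Hex a) => [|e0 he0 hae]; first by simp.
    move: (Hin e0 he0); rewrite !inE => /orP[/orP[]|]/eqP De; subst e0 => //.
    * by move: hae; simp.
    * by rewrite he0 in HX.
  + case: (Hex c) => [|e0 he0 hce]; first by simp.
    move: (Hin e0 he0); rewrite !inE => /orP[/orP[]|]/eqP De; subst e0 => //.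
    * by move: hce; simp.
    * by rewrite he0 in HX.
Qed.

End S.

Ltac midt mid p q r w :=
  first [ by apply: (mid p q r) | by apply: (mid p q w)
        | by apply: (mid p r w) | by apply: (mid q r w) ].

(* e = ab with l(e)=a, r(e)=b (rk a < rk b); e' = cd with l(e')=c, r(e')=d. *)
Theorem lemma7 (T : finType) (adj : rel T) (rk : T -> nat)
  (a b c d : T) :
  bipartite_permutation_graph adj ->
  transitive_vertex_ordering adj rk ->
  adj a b -> rk a < rk b ->
  adj c d -> rk c < rk d ->
  rk a < rk c ->
  ((rk b < rk c) ->
     uniquely_restricted adj [set [set a; b]; [set c; d]]) /\
  ((rk c < rk b < rk d) ->
     (uniquely_restricted adj [set [set a; b]; [set c; d]] <-> ~~ adj a d)) /\
  ((rk d < rk b) ->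
     ~ uniquely_restricted adj [set [set a; b]; [set c; d]]).
Proof.
move=> [[Hsym Hirr] [_ [col Hcol]]] [Hinj Htr] ab hab cd hcd hac.
have mid u v w : rk u < rk v -> rk v < rk w -> adj u v -> adj v w -> False.
  move=> h1 h2 h3 h4; have [H1 _] := Htr u v w h1 h2; have h5 := H1 h3 h4.
  move: (Hcol _ _ h3) (Hcol _ _ h4) (Hcol _ _ h5).
  by case: (col u); case: (col v); case: (col w).
have ne u v : rk u < rk v -> u != v.
  by move=> h; apply/eqP => E; rewrite E ltnn in h.
have nes u v : rk u < rk v -> v != u by move=> h; rewrite eq_sym ne.
have had : rk a < rk d := ltn_trans hac hcd.
split; [|split].
- move=> hbc.
  have hbd : rk b < rk d := ltn_trans hbc hcd.
  apply: (@ur _ _ a b c d a d); try solve [apply: ne; done | apply: nes; done]; rewrite ?inE ?eqxx ?orbT //.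
  move=> u v huv; (have huv' : adj v u by rewrite Hsym);
  move: huv huv'; rewrite !inE => huv huv' /orP[/orP[]|/orP[]]/eqP E1 /orP[/orP[]|/orP[]]/eqP E2;
  subst u v;
  first [ by rewrite Hirr in huv
        | by rewrite ?inE eqxx ?orbT
        | by rewrite setUC ?inE eqxx ?orbT
        | match goal with H: is_true (~~ ?e), H': is_true ?e |- _ => by rewrite H' in H end
        | exfalso; midt mid a b c d ].
- case/andP => hcb hbd.
  have bc : adj b c.
    have [_ H2] := Htr a c b hac hcb.
    case: (H2 ab) => // ac; [exfalso; exact: (mid a c d)| by rewrite Hsym].
  split.
  + move=> H; apply/negP => ad.
    apply: (@not_ur _ adj a b c d) H => //; solve [apply: ne; done | apply: nes; done].
  + move=> nad.
    apply: (@ur _ _ a b c d b c); try solve [apply: ne; done | apply: nes; done]; rewrite ?inE ?eqxx ?orbT //.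
    move=> u v huv; (have huv' : adj v u by rewrite Hsym);
  move: huv huv'; rewrite !inE => huv huv' /orP[/orP[]|/orP[]]/eqP E1 /orP[/orP[]|/orP[]]/eqP E2;
  subst u v;
  first [ by rewrite Hirr in huv
        | by rewrite ?inE eqxx ?orbT
        | by rewrite setUC ?inE eqxx ?orbT
        | match goal with H: is_true (~~ ?e), H': is_true ?e |- _ => by rewrite H' in H end
        | exfalso; midt mid a c b d ].
- move=> hdb.
  have hcb : rk c < rk b := ltn_trans hcd hdb.
  have bc : adj b c.
    have [_ H2] := Htr a c b hac hcb.
    case: (H2 ab) => // ac; [exfalso; exact: (mid a c d)| by rewrite Hsym].
  have ad : adj a d.
    have [_ H2] := Htr a d b had hdb.
    case: (H2 ab) => // db; exfalso; exact: (mid c d b).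
  apply: (@not_ur _ adj a b c d) => //; solve [apply: ne; done | apply: nes; done].
Qed.
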